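(* Let $\mathcal{L}$ and $T$ be as in the context, and let $X$ be an $\exists$-simple set. (1) If $f\colon X\to Y$ is $\exists$-strongly definable and $Z\subseteq X$ is $\exists$-simple, then the restriction $f|_Z\colon Z\to Y$ is $\exists$-strongly definable. (2) If $f\colon X\to Y$ and $g\colon Y\to Z$ are $\exists$-strongly definable (with $Y$ $\exists$-simple), then so is $g\circ f$. (3) The $\exists$-strongly definable functions $X\to\mathrm{VF}$ form a ring under pointwise addition and multiplication. (4) If $f\colon X\to\mathrm{RV}_{n_1}\times\dots\times\mathrm{RV}_{n_r}$ is a definable function whose graph is $\exists$-simple, then $f$ is $\exists$-strongly definable.
   Context: $\mathcal{L}_{\mathrm{RV}}$ is the multisorted language with sorts $\mathrm{VF}$ (valued field) and $\mathrm{RV}_N$ ($N\ge1$), where for a valued field $K$ with valuation ring $\mathcal{O}_K$ and maximal ideal $\mathcal{M}_K$, $\mathrm{RV}_N=K^\times/(1+N\mathcal{M}_K)\cup\{0\}$; it contains the ring language on $\mathrm{VF}$, multiplication, constants $0,1$, a divisibility relation $\mid$ (comparison of valuations) and a partial-addition relation $\oplus$ on each $\mathrm{RV}_N$, the projections $\mathrm{rv}_N\colon\mathrm{VF}\to\mathrm{RV}_N$, $\mathrm{rv}_{N,M}\colon\mathrm{RV}_M\to\mathrm{RV}_N$ ($N\mid M$), and Hensel-lift relation symbols $P_{N,d}$ on $\mathrm{RV}_N\times\mathrm{RV}_{N^2}^{d+1}$. $\mathcal{L}$ is an expansion of $\mathcal{L}_{\mathrm{RV}}$ by constants and by function and relation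 symbols not involving $\mathrm{VF}$, and $T$ is an $\mathcal{L}$-theory containing the theory of nontrivially valued Henselian valued fields of characteristic zero. Definable sets/functions are those defined by $\mathcal{L}$-formulas in all models of $T$; formulas are equivalent if equivalent modulo $T$; a definable function $f\colon X\to Y$ is a family of functions with domain exactly $X$ whose graph is definable. An $\exists$-simple formula is one of the form $(\exists\xi\in\mathrm{RV}_{n'_1}\times\dots\times\mathrm{RV}_{n'_s})\psi(x,\xi)$ with $\psi$ quantifier-free; an $\exists$-simple set is one defined by such a formula. If the graph of $f$ is given by $\varphi(x,y)$, then for a formula $\psi(y,z)$, $\psi(f(x),z)$ abbreviates $\exists y(\varphi(x,y)\wedge\psi(y,z))$. For $X$ $\exists$-simple, a definable $f\colon X\to Y$ is $\exists$-strongly definable if for every $\exists$-simple formula $\psi(y,z)$ there is an $\exists$-simple formula $\chi(x,z)$ such that $\psi(f(x),z)$ is equivalent to $\chi(x,z)$. *)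

(* Defs.v *)
(* A deep embedding of the multisorted language L_RV
   (expanded by RV-only symbols and constants) and its semantics in
   Henselian nontrivially valued fields of characteristic 0. *)
From mathcomp Require Import all_boot all_algebra.
From Stdlib Require Import ClassicalEpsilon.
Set Implicit Arguments.
Unset Strict Implicit.
Unset Printing Implicit Defensive.
Import GRing.Theory.
Local Open Scope ring_scope.

(* Sorts: VF, and RVs n which stands for RV_{n+1} (so N = n.+1 >= 1). *)
Inductive Lsort := VFs | RVs of nat.

Definition sort_eq_dec (a b : Lsort) : {a = b} + {a <> b}.
Proof. decide equality; apply PeanoNat.Nat.eq_dec. Defined.

Definition var := (Lsort * nat)%type.

Definition var_eq_dec (v w : var) : {v = w} + {v <> w}.
Proof. decide equality; [apply PeanoNat.Nat.eq_dec | apply sort_eq_dec]. Defined.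

(* maximal ideal of the valuation ring O: the non-units of O *)
Definition maxi (K : fieldType) (O : K -> Prop) (m : K) : Prop :=
  O m /\ (m = 0 \/ ~ O m^-1).

(* the class of x in RV_{n+1} = K^x/(1 + (n+1) M_K) u {0} *)
Definition rvcls (K : fieldType) (O : K -> Prop) (n : nat) (x : K) : K -> Prop :=
  fun y => (x = 0 /\ y = 0) \/
           (x <> 0 /\ exists m, maxi O m /\ y = x * (1 + n.+1%:R * m)).

Definition rvT (K : fieldType) (O : K -> Prop) (n : nat) : Type :=
  {A : K -> Prop | exists x, A = rvcls O n x}.

Definition rv (K : fieldType) (O : K -> Prop) (n : nat) (x : K) : rvT O n :=
  exist _ (rvcls O n x) (ex_intro _ x erefl).

Definition rvrep (K : fieldType) (O : K -> Prop) (n : nat) (a : rvT O n) : K :=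
  proj1_sig (constructive_indefinite_description _ (proj2_sig a)).

Definition rvin (K : fieldType) (O : K -> Prop) (n : nat) (x : K) (a : rvT O n) : Prop :=
  proj1_sig a x.

(* extra VF constants; extra function symbols RV^k -> RV (RV constants are
   the 0-ary ones); extra relation symbols on RV sorts.  Sort indices n
   mean RV_{n+1}. *)
Record sig := Sig {
  vcst : Type;
  fsym : Type;
  fdom : fsym -> seq nat;
  fcod : fsym -> nat;
  rsym : Type;
  rdom : rsym -> seq nat }.

Record Lstruct (S : sig) := LStruct {
  LK : fieldType;
  LO : LK -> Prop;
  LO1 : LO 1;
  LOD : forall x y, LO x -> LO y -> LO (x + y);
  LON : forall x, LO x -> LO (- x);
  LOM : forall x y, LO x -> LO y -> LO (x * y);
  LOV : forall x : LK, x != 0 -> LO x \/ LO x^-1;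
  Lnontriv : exists x : LK, ~ LO x;
  Lchar0 : forall n : nat, n.+1%:R != 0 :> LK;
  Lhensel : forall p : {poly LK}, (forall i, LO p`_i) ->
    forall a, LO a -> maxi LO p.[a] -> ~ maxi LO (p^`()).[a] ->
    exists b, LO b /\ p.[b] = 0 /\ maxi LO (b - a);
  Lvc : vcst S -> LK;
  Lfn : forall f : fsym S,
    (forall i : 'I_(size (fdom f)), rvT LO (nth 0%N (fdom f) i)) -> rvT LO (fcod f);
  Lrl : forall r : rsym S,
    (forall i : 'I_(size (rdom r)), rvT LO (nth 0%N (rdom r) i)) -> Prop }.

Definition carrier (S : sig) (M : Lstruct S) (s : Lsort) : Type :=
  match s with VFs => LK M | RVs n => rvT (@LO S M) n end.

Definition asg (S : sig) (M : Lstruct S) := forall v : var, carrier M v.1.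

Definition upd (S : sig) (M : Lstruct S) (rho : asg M) (v : var) (a : carrier M v.1)
  : asg M :=
  fun w => match var_eq_dec v w with
           | left e => eq_rect v (fun u => carrier M u.1) a w e
           | right _ => rho w end.

Inductive term (S : sig) : Lsort -> Type :=
| tvar : forall s, nat -> term S s
| tvc : vcst S -> term S VFs
| t0 : term S VFs
| t1 : term S VFs
| tadd : term S VFs -> term S VFs -> term S VFs
| topp : term S VFs -> term S VFs
| tmul : term S VFs -> term S VFs -> term S VFs
| trv : forall n, term S VFs -> term S (RVs n)
| trvrv : forall n m, (n.+1 %| m.+1)%N -> term S (RVs m) -> term S (RVs n)
| trv0 : forall n, term S (RVs n)
| trv1 : forall n, term S (RVs n)
| trvmul : forall n, term S (RVs n) -> term S (RVs n) -> term S (RVs n)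
| tfn : forall f : fsym S,
    (forall i : 'I_(size (fdom f)), term S (RVs (nth 0%N (fdom f) i))) ->
    term S (RVs (fcod f)).

Inductive formula (S : sig) : Type :=
| feq : forall s, term S s -> term S s -> formula S
| fdiv : forall n, term S (RVs n) -> term S (RVs n) -> formula S
| fplus : forall n, term S (RVs n) -> term S (RVs n) -> term S (RVs n) -> formula S
| fhens : forall n d, term S (RVs n) ->
    ('I_d.+1 -> term S (RVs ((n.+1 ^ 2).-1))) -> formula S
| frel : forall r : rsym S,
    (forall i : 'I_(size (rdom r)), term S (RVs (nth 0%N (rdom r) i))) -> formula S
| ftrue : formula S
| fnot : formula S -> formula S
| fand : formula S -> formula S -> formula S
| for_ : formula S -> formula S -> formula S
| fex : var -> formula S -> formula S.

Fixpoint teval (S : sig) (M : Lstruct S) (rho : asg M) (s : Lsort) (t : term S s)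
  : carrier M s :=
  match t in term _ s0 return carrier M s0 with
  | tvar s i => rho (s, i)
  | tvc c => Lvc M c
  | t0 => (0 : LK M)
  | t1 => (1 : LK M)
  | tadd a b => ((teval rho a : LK M) + (teval rho b : LK M) : LK M)
  | topp a => (- (teval rho a : LK M) : LK M)
  | tmul a b => ((teval rho a : LK M) * (teval rho b : LK M) : LK M)
  | trv n a => rv (@LO S M) n (teval rho a : LK M)
  | trvrv n m _ a => rv (@LO S M) n (rvrep (teval rho a : rvT (@LO S M) m))
  | trv0 n => rv (@LO S M) n 0
  | trv1 n => rv (@LO S M) n 1
  | trvmul n a b => rv (@LO S M) n (rvrep (teval rho a : rvT (@LO S M) n)
                                   * rvrep (teval rho b : rvT (@LO S M) n))
  | tfn f args => @Lfn S M f (fun i => teval rho (args i))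
  end.

Fixpoint holds (S : sig) (M : Lstruct S) (rho : asg M) (phi : formula S) : Prop :=
  match phi with
  | feq s a b => teval rho a = teval rho b
  | fdiv n a b =>                       (* v(a) <= v(b) *)
      let x := rvrep (teval rho a : rvT (@LO S M) n) in
      let y := rvrep (teval rho b : rvT (@LO S M) n) in
      y = 0 \/ (x <> 0 /\ LO (y / x))
  | fplus n a b c =>                    (* a (+) b = c, where defined *)
      forall x y : LK M, rvin x (teval rho a : rvT (@LO S M) n) ->
        rvin y (teval rho b : rvT (@LO S M) n) ->
        rvin (x + y) (teval rho c : rvT (@LO S M) n)
  | fhens n d a e =>
      forall cs : 'I_d.+1 -> LK M,
        (forall i, rvin (cs i) (teval rho (e i) : rvT (@LO S M) _)) ->
        exists x : LK M, rvin x (teval rho a : rvT (@LO S M) n) /\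
          \sum_(i < d.+1) cs i * x ^+ i = 0
  | frel r args => @Lrl S M r (fun i => teval rho (args i))
  | ftrue => True
  | fnot p => ~ holds rho p
  | fand p q => holds rho p /\ holds rho q
  | for_ p q => holds rho p \/ holds rho q
  | fex v p => exists a : carrier M v.1, holds (@upd S M rho v a) p
  end.

Fixpoint tfv (S : sig) (P : var -> Prop) (s : Lsort) (t : term S s) : Prop :=
  match t with
  | tvar s i => P (s, i)
  | tvc _ | t0 | t1 | trv0 _ | trv1 _ => True
  | tadd a b | tmul a b | trvmul _ a b => tfv P a /\ tfv P b
  | topp a | trv _ a | trvrv _ _ _ a => tfv P a
  | tfn f args => forall i, tfv P (args i)
  end.

Fixpoint ffv (S : sig) (P : var -> Prop) (phi : formula S) : Prop :=
  match phi with
  | feq _ a b | fdiv _ a b => tfv P a /\ tfv P b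
  | fplus _ a b c => [/\ tfv P a, tfv P b & tfv P c]
  | fhens _ _ a e => tfv P a /\ forall i, tfv P (e i)
  | frel r args => forall i, tfv P (args i)
  | ftrue => True
  | fnot p => ffv P p
  | fand p q | for_ p q => ffv P p /\ ffv P q
  | fex v p => ffv (fun w => w = v \/ P w) p
  end.

Fixpoint qf (S : sig) (phi : formula S) : Prop :=
  match phi with
  | fex _ _ => False
  | fnot p => qf p
  | fand p q | for_ p q => qf p /\ qf q
  | _ => True
  end.

Inductive esimple (S : sig) : formula S -> Prop :=
| es_qf : forall phi, qf phi -> esimple phi
| es_ex : forall n i phi, esimple phi -> esimple (fex (RVs n, i) phi).

Definition theory (S : sig) (T : formula S -> Prop) : Prop :=
  forall phi, T phi -> ffv (fun _ => False) phi.

Definition models (S : sig) (T : formula S -> Prop) (M : Lstruct S) : Prop :=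
  forall phi, T phi -> forall rho : asg M, holds rho phi.

Fixpoint tuple (S : sig) (M : Lstruct S) (ss : seq Lsort) : Type :=
  match ss with [::] => unit | s :: ss' => (carrier M s * tuple M ss')%type end.

Fixpoint tget (S : sig) (M : Lstruct S) (rho : asg M) (ss : seq Lsort) (off : nat)
  : tuple M ss :=
  match ss return tuple M ss with
  | [::] => tt
  | s :: ss' => (rho (s, off), tget rho ss' off.+1)
  end.

Definition varset (ss : seq Lsort) (off : nat) (v : var) : Prop :=
  (off <= v.2 < off + size ss)%N /\ v.1 = nth VFs ss (v.2 - off).

Definition dset (S : sig) (ss : seq Lsort) := forall M : Lstruct S, tuple M ss -> Prop.

Definition fullset (S : sig) (ss : seq Lsort) : dset S ss := fun _ _ => True.

Definition defines (S : sig) (T : formula S -> Prop) (ss : seq Lsort)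
  (X : dset S ss) (phi : formula S) : Prop :=
  ffv (varset ss 0) phi /\
  forall M, models T M -> forall rho : asg M, holds rho phi <-> X M (tget rho ss 0).

Definition definable S T ss (X : dset S ss) := exists phi, defines T X phi.
Definition esimple_set S T ss (X : dset S ss) := exists phi, esimple phi /\ defines T X phi.

(* a family of functions; only its values on the domain X matter *)
Definition dfunc (S : sig) (ss ts : seq Lsort) :=
  forall M : Lstruct S, tuple M ss -> tuple M ts.

Definition defines_graph (S : sig) (T : formula S -> Prop) (ss ts : seq Lsort)
  (X : dset S ss) (F : dfunc S ss ts) (phi : formula S) : Prop :=
  ffv (varset (ss ++ ts) 0) phi /\
  forall M, models T M -> forall rho : asg M,
    holds rho phi <-> (X M (tget rho ss 0) /\ tget rho ts (size ss) = F M (tget rho ss 0)).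

Definition definable_fun (S : sig) (T : formula S -> Prop) (ss ts : seq Lsort)
  (X : dset S ss) (Y : dset S ts) (F : dfunc S ss ts) : Prop :=
  definable T X /\ definable T Y /\
  (forall M, models T M -> forall x, X M x -> Y M (F M x)) /\
  exists phi, defines_graph T X F phi.

(* F : X -> Y is exists-strongly definable: X exists-simple, F definable and
   for every exists-simple psi(y,z) there is an exists-simple chi(x,z) with
   psi(F(x),z) <-> chi(x,z) modulo T, where psi(F(x),z) is
   exists y (graph(x,y) /\ psi(y,z)).  Variables: in psi, y is the block at 0
   and z the block at size ts; in chi, x at 0 and z at size ss. *)
Definition estrong (S : sig) (T : formula S -> Prop) (ss ts : seq Lsort)
  (X : dset S ss) (Y : dset S ts) (F : dfunc S ss ts) : Prop :=
  esimple_set T X /\ definable_fun T X Y F /\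
  forall (us : seq Lsort) (psi : formula S),
    esimple psi -> ffv (varset (ts ++ us) 0) psi ->
    exists chi, esimple chi /\ ffv (varset (ss ++ us) 0) chi /\
      forall M, models T M -> forall rho : asg M,
        holds rho chi <->
        (X M (tget rho ss 0) /\
         exists rho' : asg M, tget rho' ts 0 = F M (tget rho ss 0) /\
           tget rho' us (size ts) = tget rho us (size ss) /\ holds rho' psi).

Definition vf_val (S : sig) (M : Lstruct S) (a : tuple M [:: VFs]) : LK M := a.1.
Definition vf_tup (S : sig) (M : Lstruct S) (a : LK M) : tuple M [:: VFs] := (a, tt).

Definition fadd S ss (F G : dfunc S ss [:: VFs]) : dfunc S ss [:: VFs] :=
  fun M x => vf_tup (vf_val (F M x) + vf_val (G M x)).
Definition fmul S ss (F G : dfunc S ss [:: VFs]) : dfunc S ss [:: VFs] :=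
  fun M x => vf_tup (vf_val (F M x) * vf_val (G M x)).
Definition fopp S ss (F : dfunc S ss [:: VFs]) : dfunc S ss [:: VFs] :=
  fun M x => vf_tup (- vf_val (F M x)).
Definition fzero S ss : dfunc S ss [:: VFs] := fun M _ => vf_tup (0 : LK M).
Definition fone S ss : dfunc S ss [:: VFs] := fun M _ => vf_tup (1 : LK M).

(* Main.v *)
From mathcomp Require Import all_boot all_algebra zify.
From Stdlib Require Import FunctionalExtensionality Eqdep_dec.
Require Import Defs.
Set Implicit Arguments.
Unset Strict Implicit.
Unset Printing Implicit Defensive.

Lemma upd_same (S : sig) (M : Lstruct S) (rho : asg M) v a : @upd S M rho v a v = a.
Proof. rewrite /upd; case: (var_eq_dec v v) => [e|n]; last by []. by rewrite (UIP_dec var_eq_dec e erefl). Qed.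
Lemma upd_other (S : sig) (M : Lstruct S) (rho : asg M) v a w : v <> w -> @upd S M rho v a w = rho w.
Proof. rewrite /upd; case: (var_eq_dec v w) => [e|n] //. Qed.
Lemma upd_ext (S : sig) (M : Lstruct S) (r1 r2 : asg M) v a w :
  (v <> w -> r1 w = r2 w) -> @upd S M r1 v a w = @upd S M r2 v a w.
Proof. rewrite /upd; case: (var_eq_dec v w) => [e|n] //; auto. Qed.

Lemma tfv_mono (S : sig) (P P' : var -> Prop) s (t : term S s) :
  (forall w, P w -> P' w) -> tfv P t -> tfv P' t.
Proof.
move=> H; elim: t => //=; try by intuition.
Qed.

Lemma ffv_mono (S : sig) (phi : formula S) : forall (P P' : var -> Prop),
  (forall w, P w -> P' w) -> ffv P phi -> ffv P' phi.
Proof.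
elim: phi => /=.
- move=> s a b P P' H [? ?]; split; exact: tfv_mono H _.
- move=> n a b P P' H [? ?]; split; exact: tfv_mono H _.
- move=> n a b c P P' H [? ? ?]; split; exact: tfv_mono H _.
- move=> n d a e P P' H [? He]; split; first exact: tfv_mono H _.
  by move=> i; apply: tfv_mono H (He i).
- move=> r args P P' H He i; exact: tfv_mono H (He i).
- by [].
- move=> p IH P P' H; exact: IH.
- move=> p IHp q IHq P P' H [? ?]; split; [exact: IHp H _ | exact: IHq H _].
- move=> p IHp q IHq P P' H [? ?]; split; [exact: IHp H _ | exact: IHq H _].
- move=> v p IH P P' H; apply: IH => w [->|/H]; auto.
Qed.

Lemma teval_ext (S : sig) (M : Lstruct S) (P : var -> Prop) (r1 r2 : asg M) s (t : term S s) :
  (forall w, P w -> r1 w = r2 w) -> tfv P t -> teval r1 t = teval r2 t.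
Proof.
move=> H; elim: t => /=.
- by move=> s0 n /H.
- by [].
- by [].
- by [].
- by move=> a IHa b IHb [/IHa -> /IHb ->].
- by move=> a IHa /IHa ->.
- by move=> a IHa b IHb [/IHa -> /IHb ->].
- by move=> n a IHa /IHa ->.
- by move=> n m i a IHa /IHa ->.
- by [].
- by [].
- by move=> n a IHa b IHb [/IHa -> /IHb ->].
- move=> f args IH Ha; congr (Lfn _); apply: functional_extensionality_dep => i; exact: IH.
Qed.

Lemma holds_ext (S : sig) (M : Lstruct S) (phi : formula S) : forall (P : var -> Prop) (r1 r2 : asg M),
  (forall w, P w -> r1 w = r2 w) -> ffv P phi -> (holds r1 phi <-> holds r2 phi).
Proof.
elim: phi => /=.
- move=> s a b P r1 r2 H [Ha Hb]; by rewrite (teval_ext H Ha) (teval_ext H Hb).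
- move=> n a b P r1 r2 H [Ha Hb]; by rewrite (teval_ext H Ha) (teval_ext H Hb).
- move=> n a b c P r1 r2 H [Ha Hb Hc]; by rewrite (teval_ext H Ha) (teval_ext H Hb) (teval_ext H Hc).
- move=> n d a e P r1 r2 H [Ha He].
  have Ei i : teval r1 (e i) = teval r2 (e i) by apply: teval_ext H (He i).
  rewrite (teval_ext H Ha); split=> Hh cs Hcs; apply: Hh => i; by [rewrite Ei | rewrite -Ei].
- move=> r args P r1 r2 H Ha.
  have -> : (fun i => teval r1 (args i)) = (fun i => teval r2 (args i)).
    apply: functional_extensionality_dep => i; exact: teval_ext H (Ha i).
  by [].
- by [].
- move=> p IH P r1 r2 H Hp; by rewrite (IH P r1 r2 H Hp).
- move=> p IHp q IHq P r1 r2 H [Hp Hq]; by rewrite (IHp P r1 r2 H Hp) (IHq P r1 r2 H Hq).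
- move=> p IHp q IHq P r1 r2 H [Hp Hq]; by rewrite (IHp P r1 r2 H Hp) (IHq P r1 r2 H Hq).
- move=> v p IH P r1 r2 H Hp.
  have E a : holds (@upd S M r1 v a) p <-> holds (@upd S M r2 v a) p.
    apply: (IH _ _ _ _ Hp) => w Hw; apply: upd_ext => Hvw.
    case: Hw => [E|/H //]; by rewrite E in Hvw.
  by split=> [[a Ha]|[a Ha]]; exists a; apply/E.
Qed.

Fixpoint tsub (S : sig) (sg : forall u : var, term S u.1) s (t : term S s) : term S s :=
  match t in term _ s0 return term S s0 with
  | tvar s i => sg (s, i)
  | tvc c => tvc c
  | t0 => t0 S
  | t1 => t1 S
  | tadd a b => tadd (tsub sg a) (tsub sg b)
  | topp a => topp (tsub sg a)
  | tmul a b => tmul (tsub sg a) (tsub sg b)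
  | trv n a => trv n (tsub sg a)
  | trvrv n m h a => trvrv h (tsub sg a)
  | trv0 n => trv0 S n
  | trv1 n => trv1 S n
  | trvmul n a b => trvmul (tsub sg a) (tsub sg b)
  | tfn f args => tfn (fun i => tsub sg (args i))
  end.

Fixpoint fsub (S : sig) (sg : forall u : var, term S u.1) (phi : formula S) : formula S :=
  match phi with
  | feq s a b => feq (tsub sg a) (tsub sg b)
  | fdiv n a b => fdiv (tsub sg a) (tsub sg b)
  | fplus n a b c => fplus (tsub sg a) (tsub sg b) (tsub sg c)
  | fhens n d a e => fhens (tsub sg a) (fun i => tsub sg (e i))
  | frel r args => frel (fun i => tsub sg (args i))
  | ftrue => ftrue S
  | fnot p => fnot (fsub sg p)
  | fand p q => fand (fsub sg p) (fsub sg q)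
  | for_ p q => for_ (fsub sg p) (fsub sg q)
  | fex v p => fex v (fsub sg p)
  end.

Lemma teval_tsub (S : sig) (M : Lstruct S) (r : asg M) sg s (t : term S s) :
  teval r (tsub sg t) = teval (fun u => teval r (sg u)) t.
Proof.
elim: t => //=; try by move=> *; congruence.
move=> f args IH; congr (Lfn _); apply: functional_extensionality_dep => i; exact: IH.
Qed.

Lemma tfv_tsub (S : sig) (P P' : var -> Prop) sg s (t : term S s) :
  (forall u, P u -> tfv P' (sg u)) -> tfv P t -> tfv P' (tsub sg t).
Proof.
move=> H; elim: t => //=; try by intuition.
by move=> s0 n /H.
Qed.

Lemma holds_fsub (S : sig) (M : Lstruct S) sg (phi : formula S) : forall (r : asg M),
  qf phi -> (holds r (fsub sg phi) <-> holds (fun u => teval r (sg u)) phi).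
Proof.
elim: phi => /=.
- by move=> s a b r _; rewrite !teval_tsub.
- by move=> n a b r _; rewrite !teval_tsub.
- by move=> n a b c r _; rewrite !teval_tsub.
- move=> n d a e r _; rewrite teval_tsub.
  by split=> Hh cs Hcs; apply: Hh => i; move: (Hcs i); rewrite teval_tsub.
- move=> rr args r _.
  have -> : (fun i => teval r (tsub sg (args i))) = (fun i => teval (fun u => teval r (sg u)) (args i)).
    apply: functional_extensionality_dep => i; exact: teval_tsub.
  by [].
- by [].
- by move=> p IH r Hq; rewrite IH.
- by move=> p IHp q IHq r [Hp Hq]; rewrite IHp // IHq.
- by move=> p IHp q IHq r [Hp Hq]; rewrite IHp // IHq.
- by [].
Qed.

Lemma ffv_fsub (S : sig) (P P' : var -> Prop) sg (phi : formula S) :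
  (forall u, P u -> tfv P' (sg u)) -> qf phi -> ffv P phi -> ffv P' (fsub sg phi).
Proof.
move=> H; elim: phi => /=.
- move=> s a b _ [? ?]; split; exact: tfv_tsub H _.
- move=> n a b _ [? ?]; split; exact: tfv_tsub H _.
- move=> n a b c _ [? ? ?]; split; exact: tfv_tsub H _.
- move=> n d a e _ [? He]; split; first exact: tfv_tsub H _.
  by move=> i; apply: tfv_tsub H (He i).
- move=> r args _ He i; exact: tfv_tsub H (He i).
- by [].
- by [].
- move=> p IHp q IHq [? ?] [? ?]; split; auto.
- move=> p IHp q IHq [? ?] [? ?]; split; auto.
- by [].
Qed.

Lemma qf_fsub (S : sig) sg (phi : formula S) : qf phi -> qf (fsub sg phi).
Proof. elim: phi => //= ; intuition. Qed.

Definition exs (S : sig) (bs : seq var) (phi : formula S) : formula S := foldr (@fex S) phi bs.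

Definition agree (S : sig) (M : Lstruct S) (bs : seq var) (r1 r2 : asg M) :=
  forall w, ~ List.In w bs -> r1 w = r2 w.

Lemma holds_exs (S : sig) (M : Lstruct S) bs (phi : formula S) (r : asg M) :
  holds r (exs bs phi) <-> exists r', agree bs r r' /\ holds r' phi.
Proof.
elim: bs r => [|v bs IH] r /=.
- split=> [H|[r' [Ha H]]]; first by exists r.
  have -> : r = r' by apply: functional_extensionality_dep => w; exact: Ha.
  by [].
- split=> [[a /IH [r' [Ha H]]]|[r' [Ha H]]].
  + exists r'; split=> // w Hw.
    have Hvw : v <> w by move=> E; apply: Hw; left.
    have Hbs : ~ List.In w bs by move=> Hi; apply: Hw; right.
    by rewrite -(Ha w Hbs) upd_other.
  + exists (r' v); apply/IH; exists r'; split=> // w Hw.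
    case: (var_eq_dec v w) => [E|N]; first by subst w; rewrite upd_same.
    rewrite upd_other //; apply: Ha => -[|] //; auto.
Qed.

Definition isRV (s : Lsort) := if s is RVs _ then true else false.

Lemma esimple_exs (S : sig) bs (phi : formula S) :
  (forall b, List.In b bs -> isRV b.1) -> esimple phi -> esimple (exs bs phi).
Proof.
elim: bs => [|[s i] bs IH] //= H Hp.
case: s H => [|n] H; first by move: (H _ (or_introl erefl)).
apply: es_ex; apply: IH => // b Hb; apply: H; auto.
Qed.

Lemma ffv_exs (S : sig) bs (phi : formula S) (P : var -> Prop) :
  ffv (fun w => List.In w bs \/ P w) phi -> ffv P (exs bs phi).
Proof.
elim: bs P => [|v bs IH] P /=.
- apply: ffv_mono => w [] //.
- move=> H; apply: IH; apply: ffv_mono H => w /= [[->|?]|?]; auto.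
Qed.

Lemma varset_hd s ss o : varset (s :: ss) o (s, o).
Proof. rewrite /varset /= subnn; split=> //; lia. Qed.

Lemma varset_tl s ss o w : varset ss o.+1 w -> varset (s :: ss) o w.
Proof.
case: w => ws wi; rewrite /varset /= => -[H1 ->]; split; first lia.
have -> : wi - o = (wi - o.+1).+1 by lia.
by [].
Qed.

Lemma varset_inv s ss o w : varset (s :: ss) o w -> w = (s, o) \/ varset ss o.+1 w.
Proof.
case: w => ws wi; rewrite /varset /= => -[H1 H2].
case: (eqVneq wi o) => [E|N].
- by left; subst wi; rewrite subnn /= in H2; subst ws.
- right; split; first lia.
  have E : wi - o = (wi - o.+1).+1 by lia.
  by rewrite E in H2.
Qed.
Arguments varset_tl {s ss o w} _.

Lemma varset_bound ss o w : varset ss o w -> o <= w.2 < o + size ss.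
Proof. by case. Qed.

Lemma tget_eq_iff (S : sig) (M : Lstruct S) (r1 r2 : asg M) ss : forall o1 o2,
  tget r1 ss o1 = tget r2 ss o2 <-> forall w, varset ss o1 w -> r1 w = r2 (w.1, w.2 - o1 + o2).
Proof.
elim: ss => [|s ss IH] o1 o2 /=.
- split=> // _ w /varset_bound /=; lia.
- split.
  + move=> [E1 E2] w /varset_inv [->|Hw] /=; first by rewrite subnn add0n.
    move/IH: E2 => /(_ w Hw); move: (varset_bound Hw) => /= Hb.
    by have -> : w.2 - o1.+1 + o2.+1 = w.2 - o1 + o2 by lia.
  + move=> H; congr (_, _).
    * by move: (H _ (varset_hd s ss o1)); rewrite /= subnn add0n.
    * apply/IH => w Hw; rewrite (H _ (varset_tl Hw)); move: (varset_bound Hw) => /= Hb.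
      by have -> : w.2 - o1.+1 + o2.+1 = w.2 - o1 + o2 by lia.
Qed.

Lemma tget_ext (S : sig) (M : Lstruct S) (r1 r2 : asg M) ss o :
  (forall w, varset ss o w -> r1 w = r2 w) -> tget r1 ss o = tget r2 ss o.
Proof.
move=> H; apply/tget_eq_iff => -[ws wi] Hw; rewrite H //=.
move: (varset_bound Hw) => /= Hb; by rewrite subnK //; case/andP: Hb.
Qed.

Lemma holds_tget (S : sig) (M : Lstruct S) (r1 r2 : asg M) ss o (phi : formula S) :
  ffv (varset ss o) phi -> tget r1 ss o = tget r2 ss o -> (holds r1 phi <-> holds r2 phi).
Proof.
move=> Hf /tget_eq_iff H; apply: (holds_ext _ Hf) => -[ws wi] Hw; rewrite H //=.
move: (varset_bound Hw) => /= Hb; by rewrite subnK //; case/andP: Hb.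
Qed.

Lemma tget_cat_eq (S : sig) (M : Lstruct S) (r1 r2 : asg M) a b : forall o1 o2,
  tget r1 (a ++ b) o1 = tget r2 (a ++ b) o2 <->
  tget r1 a o1 = tget r2 a o2 /\ tget r1 b (o1 + size a) = tget r2 b (o2 + size a).
Proof.
elim: a => [|s a IH] o1 o2 /=; first by rewrite !addn0; intuition.
rewrite !addnS -!addSn; split.
- by move=> [E1 /IH [E2 E3]]; rewrite E1 E2.
- by move=> [[E1 E2] E3]; rewrite E1; congr (_, _); apply/IH.
Qed.

Lemma varset_catl a b o w : varset a o w -> varset (a ++ b) o w.
Proof.
case: w => ws wi; rewrite /varset /= size_cat nth_cat => -[H1 H2]; split; first lia.
by have -> : wi - o < size a by lia.
Qed.

Lemma varset_catr a b o w : varset b (o + size a) w -> varset (a ++ b) o w.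
Proof.
case: w => ws wi; rewrite /varset /= size_cat nth_cat => -[H1 H2]; split; first lia.
have -> : wi - o < size a = false by lia.
by have -> : wi - o - size a = wi - (o + size a) by lia.
Qed.

Lemma varset_cat_inv a b o w : varset (a ++ b) o w -> varset a o w \/ varset b (o + size a) w.
Proof.
case: w => ws wi; rewrite /varset /= size_cat nth_cat => -[H1 H2].
move: H2; case: ltnP => H3 H2.
- left; split=> //; lia.
- right; split; first lia.
  by have <- : wi - o - size a = wi - (o + size a) by lia.
Qed.

Fixpoint bvars (ss : seq Lsort) (o : nat) : seq var :=
  match ss with [::] => [::] | s :: ss' => (s, o) :: bvars ss' o.+1 end.

Lemma bvars_varset ss o w : List.In w (bvars ss o) <-> varset ss o w.
Proof.
elim: ss o => [|s ss IH] o /=.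
- split=> // /varset_bound /=; lia.
- split=> [[<-|/IH]|/varset_inv [->|/IH]]; auto using varset_hd, varset_tl.
Qed.

Fixpoint tput (S : sig) (M : Lstruct S) (r : asg M) (ss : seq Lsort) (o : nat) : tuple M ss -> asg M :=
  match ss return tuple M ss -> asg M with
  | [::] => fun _ => r
  | s :: ss' => fun a => @upd S M (@tput S M r ss' o.+1 a.2) (s, o) a.1
  end.
Arguments tput {S M} r ss o a.

Lemma tput_out (S : sig) (M : Lstruct S) (r : asg M) ss : forall o (a : tuple M ss) w,
  ~ varset ss o w -> tput r ss o a w = r w.
Proof.
elim: ss => [|s ss IH] o a w //= Hw.
rewrite upd_other; last by move=> E; apply: Hw; rewrite -E; apply: varset_hd.
apply: IH => H; apply: Hw; exact: varset_tl.
Qed.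

Lemma tput_get (S : sig) (M : Lstruct S) (r : asg M) ss : forall o (a : tuple M ss),
  tget (tput r ss o a) ss o = a.
Proof.
elim: ss => [|s ss IH] o /=; first by case.
case=> x a /=; rewrite upd_same; congr (_, _).
rewrite -{2}(IH o.+1 a); apply: tget_ext => w Hw; apply: upd_other => E.
by move: (varset_bound Hw); rewrite -E /=; lia.
Qed.

Definition veqb (u v : var) : bool := if var_eq_dec u v then true else false.
Lemma veqbP u v : reflect (u = v) (veqb u v).
Proof. rewrite /veqb; case: var_eq_dec => [E|N]; by constructor. Qed.
Definition inb (w : var) (bs : seq var) : bool := if List.in_dec var_eq_dec w bs then true else false.
Lemma inbP w bs : reflect (List.In w bs) (inb w bs).
Proof. rewrite /inb; case: List.in_dec => [E|N]; by constructor. Qed.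
Arguments veqb : simpl never.
Arguments inb : simpl never.

Lemma norm (S : sig) (chi : formula S) : esimple chi -> forall (P : var -> Prop) K,
  ffv P chi -> (forall w, P w -> w.2 < K) ->
  exists bs th K', [/\ qf th, K <= K', (forall b, List.In b bs -> isRV b.1 /\ K <= b.2 < K'),
     ffv (fun w => List.In w bs \/ P w) th &
     forall M (r : asg M), holds r chi <-> holds r (exs bs th)].
Proof.
elim=> [phi Hq|n i phi Hes IH] P K Hf HK.
- exists [::], phi, K; split => //.
  by apply: ffv_mono Hf => w; right.
- set v := (RVs n, i); set K0 := maxn K i.+1; set v' := (RVs n, K0).
  have HK0 : forall w, (w = v \/ P w) -> w.2 < K0.+1.
    move=> w [->|/HK]; rewrite /K0 /=; lia.
  have [bs [th [K' [Hq HKK Hbs Hth Hsem]]]] := IH (fun w => w = v \/ P w) K0.+1 Hf HK0.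
  pose sg := fun u : var => tvar S u.1 (if veqb u v then K0 else u.2).
  have vbs : ~ List.In v bs by move=> /Hbs [_]; rewrite /= /K0; lia.
  have v'bs : ~ List.In v' bs by move=> /Hbs [_]; rewrite /= /K0; lia.
  have Pv' : forall w, P w -> w <> v' by move=> w /HK Hw E; rewrite E /= /K0 in Hw; lia.
  have Pbs : forall w, P w -> ~ List.In w bs by move=> w /HK Hw /Hbs [_]; rewrite /K0; lia.
  exists (v' :: bs), (fsub sg th), K'; split.
  + exact: qf_fsub.
  + rewrite /K0 in HKK; lia.
  + move=> b [<-|/Hbs]; first by split=> //; rewrite /K0 /=; lia.
    rewrite /K0; lia.
  + apply: (@ffv_fsub S (fun w => List.In w bs \/ (w = v \/ P w)) _ sg th _ Hq Hth) => -[us ui] H.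
    rewrite /sg /=.
    case: veqbP => [E|N]; first by case: E => -> _; left; left.
    case: H => [H|[H|H]]; [by left; right | by [] | by right].
  + move=> M r.
    have Fv : forall (r1 r2 : asg M), (forall w, List.In w bs \/ w = v \/ P w -> r1 w = r2 w) ->
      (holds r1 th <-> holds r2 th).
      move=> r1 r2 H; apply: (holds_ext _ Hth) => w [Hw|Hw]; apply: H; auto.
    rewrite holds_exs; split.
    * move=> [a /Hsem /holds_exs [r1 [Hag H1]]].
      pose r2 : asg M := fun w => if inb w bs then r1 w
                         else if veqb w v' then r1 (w.1, i) else r w.
      exists r2; split.
      - move=> w Hw; rewrite /r2; case: inbP => [Hi|_]; first by case: Hw; right.
        by case: veqbP => [E|_] //; case: Hw; left.
      - apply/holds_fsub => //; apply/(Fv _ _ _)/H1 => -[ws wi] Hw /=.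
        case: veqbP => [E|N].
        + case: E => -> ->; rewrite /r2 /=.
          case: inbP => [//|_]; by case: veqbP.
        + rewrite /r2 /=; case: inbP => [//|Hi].
          case: Hw => [//|[//|HP]].
          case: veqbP => [E|_]; first by case: (Pv' _ HP).
          by rewrite -Hag // upd_other // => E; apply: N.
    * move=> [r2 [Hag H2]]; move/holds_fsub: H2 => /(_ Hq) H2.
      exists (r2 v'); apply/Hsem/holds_exs.
      pose r1 : asg M := fun w => if inb w bs then r2 w
                         else if veqb w v then r2 (w.1, K0) else r w.
      exists r1; split.
      - move=> w Hw; rewrite /r1; case: inbP => [//|_].
        case: veqbP => [E|N]; first by subst w; rewrite upd_same.
        by rewrite upd_other // => E; apply: N.
      - apply/(Fv _ _ _)/H2 => -[ws wi] Hw /=; rewrite /r1.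
        case: inbP => [Hi|Hi].
        + case: veqbP => [E|_] //; by rewrite E in Hi.
        + case: veqbP => [E|N] //.
          case: Hw => [//|[//|HP]].
          by rewrite Hag //= => -[E|//]; apply: (Pv' _ HP).
Qed.

Lemma In_cat (w : var) (a b : seq var) : List.In w (a ++ b) <-> List.In w a \/ List.In w b.
Proof. elim: a => [|x a IH] /=; [intuition | rewrite IH; intuition]. Qed.

Definition ES (S : sig) (T : formula S -> Prop) (P : var -> Prop)
  (Q : forall M : Lstruct S, asg M -> Prop) : Prop :=
  exists chi, esimple chi /\ ffv P chi /\
    forall M, models T M -> forall rho : asg M, holds rho chi <-> Q M rho.

Lemma ES_ext (S : sig) (T : formula S -> Prop) P (Q Q' : forall M : Lstruct S, asg M -> Prop) :
  ES T P Q -> (forall M, models T M -> forall rho, Q M rho <-> Q' M rho) -> ES T P Q'.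
Proof.
move=> [chi [H1 [H2 H3]]] H; exists chi; split=> //; split=> // M HM rho.
by rewrite H3 // H.
Qed.

Lemma ES_mono (S : sig) (T : formula S -> Prop) (P P' : var -> Prop) Q :
  (forall w, P w -> P' w) -> ES T P Q -> ES T P' Q.
Proof. move=> H [chi [H1 [H2 H3]]]; exists chi; split=> //; split=> //; exact: ffv_mono H2. Qed.

Lemma ES_qf (S : sig) (T : formula S -> Prop) (P : var -> Prop) th :
  qf th -> ffv P th -> ES T P (fun M rho => holds rho th).
Proof. by move=> H1 H2; exists th; split; [exact: es_qf|]. Qed.

Lemma ES_exblock (S : sig) (T : formula S -> Prop) (P : var -> Prop) bs Q :
  (forall b, List.In b bs -> isRV b.1) -> ES T (fun w => List.In w bs \/ P w) Q ->
  ES T P (fun M rho => exists rho', agree bs rho rho' /\ Q M rho').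
Proof.
move=> Hb [chi [H1 [H2 H3]]]; exists (exs bs chi); split; first exact: esimple_exs.
split; first exact: ffv_exs.
move=> M HM rho; rewrite holds_exs; split=> -[r [Ha Hr]]; exists r; split=> //; by apply/H3.
Qed.

Lemma ES_and (S : sig) (T : formula S -> Prop) (P : var -> Prop) K Q1 Q2 :
  (forall w, P w -> w.2 < K) -> ES T P Q1 -> ES T P Q2 ->
  ES T P (fun M rho => Q1 M rho /\ Q2 M rho).
Proof.
move=> HK [c1 [E1 [F1 S1]]] [c2 [E2 [F2 S2]]].
have [bs1 [th1 [K1 [Q1' KK1 B1 G1 N1]]]] := norm E1 F1 HK.
have HK1 : forall w, P w -> w.2 < K1 by move=> w /HK; lia.
have [bs2 [th2 [K2 [Q2' KK2 B2 G2 N2]]]] := norm E2 F2 HK1.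
have P1 : forall w, P w -> ~ List.In w bs1 by move=> w /HK Hw /B1 [_]; lia.
have P2 : forall w, P w -> ~ List.In w bs2 by move=> w /HK1 Hw /B2 [_]; lia.
have D12 : forall w, List.In w bs1 -> ~ List.In w bs2 by move=> w /B1 [_ ?] /B2 [_]; lia.
exists (exs (bs1 ++ bs2) (fand th1 th2)); split.
  apply: esimple_exs; last by apply: es_qf.
  by move=> b /In_cat [/B1 []|/B2 []].
split.
  apply: ffv_exs => /=; split.
  - apply: ffv_mono G1 => w [H|H]; [left; apply/In_cat; auto | auto].
  - apply: ffv_mono G2 => w [H|H]; [left; apply/In_cat; auto | auto].
move=> M HM rho; rewrite holds_exs -S1 // -S2 // N1 N2 !holds_exs; split.
- move=> [r [Ha [H1 H2]]]; split.
  + exists (fun w => if inb w bs1 then r w else rho w); split.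
      by move=> w Hw; case: inbP.
    apply/(holds_ext _ G1)/H1 => w [Hw|Hw]; case: inbP => // Hn.
    by rewrite Ha // => /In_cat [] //; apply: P2.
  + exists (fun w => if inb w bs2 then r w else rho w); split.
      by move=> w Hw; case: inbP.
    apply/(holds_ext _ G2)/H2 => w [Hw|Hw]; case: inbP => // Hn.
    by rewrite Ha // => /In_cat [] //; apply: P1.
- move=> [[r1 [Ha1 H1]] [r2 [Ha2 H2]]].
  exists (fun w => if inb w bs1 then r1 w else if inb w bs2 then r2 w else rho w); split.
    move=> w Hw; case: inbP => [H|_]; first by case: Hw; apply/In_cat; auto.
    case: inbP => [H|_] //; by case: Hw; apply/In_cat; auto.
  split.
  + apply/(holds_ext _ G1)/H1 => w [Hw|Hw]; case: inbP => // Hn.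
    case: inbP => [H|_]; [by case: (P2 _ Hw H) | exact: Ha1 (P1 _ Hw)].
  + apply/(holds_ext _ G2)/H2 => w [Hw|Hw]; case: inbP => [H|Hn].
    * by case: (D12 _ H Hw).
    * by case: inbP.
    * by case: (P1 _ Hw H).
    * case: inbP => [H|_]; [by case: (P2 _ Hw H) | exact: Ha2 (P2 _ Hw)].
Qed.

Lemma ES_sub (S : sig) (T : formula S -> Prop) (P P' : var -> Prop) K
  (sg : forall u : var, term S u.1) Q :
  (forall w, P w -> w.2 < K) -> (forall w, P' w -> w.2 < K) ->
  (forall u, P u -> tfv P' (sg u)) -> ES T P Q ->
  ES T P' (fun M rho => Q M (fun u => teval rho (sg u))).
Proof.
move=> HK HK' Hs [c [E [F Sm]]].
have [bs [th [K1 [Qt KK B G N]]]] := norm E F HK.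
have P'bs : forall w, P' w -> ~ List.In w bs by move=> w /HK' Hw /B [_]; lia.
pose sg' := fun u : var => if inb u bs then tvar S u.1 u.2 else sg u.
exists (exs bs (fsub sg' th)); split.
  apply: esimple_exs; [by move=> b /B [] | apply: es_qf; exact: qf_fsub].
split.
  apply: ffv_exs; apply: (@ffv_fsub S (fun w => List.In w bs \/ P w)) => // -[us ui] Hu.
  rewrite /sg'; case: inbP => /= Hi; first by left.
  case: Hu => [//|Hu]; by apply: tfv_mono (Hs _ Hu) => w; right.
have help : forall M (rho r : asg M), agree bs rho r -> forall u, P u ->
    teval r (sg u) = teval rho (sg u).
  move=> M rho r Ha u Hu; apply: (teval_ext (P := P')) (Hs _ Hu) => w Hw.
  by rewrite Ha //; apply: P'bs.
move=> M HM rho; rewrite holds_exs -Sm // N holds_exs; split.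
- move=> [r [Ha H]]; move/holds_fsub: H => /(_ Qt) H.
  exists (fun u => if inb u bs then r u else teval rho (sg u)); split.
    by move=> w Hw; case: inbP.
  apply/(holds_ext _ G)/H => -[us ui] Hw; rewrite /sg' /=; case: inbP => // Hi.
  case: Hw => [//|Hw]; symmetry; exact: (help _ _ _ Ha _ Hw).
- move=> [r1 [Ha H]].
  exists (fun u => if inb u bs then r1 u else rho u); split.
    by move=> w Hw; case: inbP.
  apply/holds_fsub => //; apply/(holds_ext _ G)/H => -[us ui] Hw; rewrite /sg' /=.
  case: inbP => Hi /=; first by case: inbP.
  case: Hw => [//|Hw].
  rewrite -Ha //.
  apply: (teval_ext (P := P')) (Hs _ Hw) => w Hw'.
  case: inbP => // Hi'; by case: (P'bs _ Hw').
Qed.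

Definition strong3 (S : sig) (T : formula S -> Prop) (ss ts : seq Lsort)
  (X : dset S ss) (F : dfunc S ss ts) : Prop :=
  forall (us : seq Lsort) (psi : formula S),
    esimple psi -> ffv (varset (ts ++ us) 0) psi ->
    ES T (varset (ss ++ us) 0) (fun M rho =>
      X M (tget rho ss 0) /\
      exists rho' : asg M, tget rho' ts 0 = F M (tget rho ss 0) /\
        tget rho' us (size ts) = tget rho us (size ss) /\ holds rho' psi).

Lemma varset_lt ss o w : varset ss o w -> w.2 < o + size ss.
Proof. by move/varset_bound => /andP []. Qed.

Fixpoint eqblk (S : sig) (ss : seq Lsort) (o1 o2 : nat) : formula S :=
  match ss with
  | [::] => ftrue S
  | s :: ss' => fand (feq (tvar S s o1) (tvar S s o2)) (eqblk S ss' o1.+1 o2.+1)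
  end.
Arguments eqblk {S} ss o1 o2.

Lemma qf_eqblk (S : sig) ss o1 o2 : qf (@eqblk S ss o1 o2).
Proof. by elim: ss o1 o2 => //= s ss IH o1 o2; split. Qed.

Lemma holds_eqblk (S : sig) (M : Lstruct S) (r : asg M) ss : forall o1 o2,
  holds r (eqblk ss o1 o2) <-> tget r ss o1 = tget r ss o2.
Proof.
elim: ss => [|s ss IH] o1 o2 /=; first by [].
rewrite IH; split; first by move=> [-> ->].
by case.
Qed.

Lemma ffv_eqblk (S : sig) (P : var -> Prop) ss : forall o1 o2,
  (forall w, varset ss o1 w -> P w) -> (forall w, varset ss o2 w -> P w) ->
  ffv P (@eqblk S ss o1 o2).
Proof.
elim: ss => [|s ss IH] o1 o2 H1 H2 //=; split.
- split; [exact: H1 (varset_hd _ _ _) | exact: H2 (varset_hd _ _ _)].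
- apply: IH => w Hw; [exact: H1 (varset_tl Hw) | exact: H2 (varset_tl Hw)].
Qed.

Lemma tget_tput_other (S : sig) (M : Lstruct S) (r : asg M) ss ts o o' (a : tuple M ts) :
  (o + size ss <= o' \/ o' + size ts <= o) ->
  tget (tput r ts o' a) ss o = tget r ss o.
Proof.
move=> H; apply: tget_ext => w Hw; apply: tput_out => Hw'.
move: (varset_bound Hw) (varset_bound Hw') => /andP [? ?] /andP [? ?]; lia.
Qed.

Lemma strong_graph (S : sig) (T : formula S -> Prop) ss ts (X : dset S ss) (F : dfunc S ss ts) :
  strong3 T X F -> exists phi, defines_graph T X F phi.
Proof.
move=> H3.
have Hf : ffv (varset (ts ++ ts) 0) (@eqblk S ts 0 (size ts)).
  apply: ffv_eqblk => w Hw; [exact: varset_catl | exact: (varset_catr (o := 0))].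
have [chi [_ [Fc Sc]]] := H3 ts _ (es_qf (qf_eqblk S ts 0 (size ts))) Hf.
exists chi; split=> // M HM rho; rewrite Sc //; split.
- move=> [HX [r [E1 [E2 /holds_eqblk E3]]]]; split=> //.
  by rewrite -E2 -E3 E1.
- move=> [HX E]; split=> //.
  exists (tput (tput rho ts 0 (F M (tget rho ss 0))) ts (size ts) (tget rho ts (size ss))).
  rewrite tget_tput_other; last by left.
  rewrite !tput_get; split=> //; split=> //; apply/holds_eqblk.
  by rewrite tget_tput_other ?tput_get //; left.
Qed.

Lemma mk_estrong (S : sig) (T : formula S -> Prop) ss ts (X : dset S ss) (Y : dset S ts)
  (F : dfunc S ss ts) :
  esimple_set T X -> definable T Y ->
  (forall M, models T M -> forall x, X M x -> Y M (F M x)) ->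
  strong3 T X F -> estrong T X Y F.
Proof.
move=> HX HY Hm H3; split=> //; split=> //; split.
- by case: HX => phi [_ H]; exists phi.
- split=> //; split=> //; exact: strong_graph.
Qed.

Lemma ES_of_esimple_set (S : sig) (T : formula S -> Prop) ss (X : dset S ss) :
  esimple_set T X -> ES T (varset ss 0) (fun M rho => X M (tget rho ss 0)).
Proof. by move=> [phi [E [F Sm]]]; exists phi. Qed.

Lemma part1 (S : sig) (T : formula S -> Prop) :
  forall (ss ts : seq Lsort) (X Z : dset S ss) (Y : dset S ts) (F : dfunc S ss ts),
     estrong T X Y F -> esimple_set T Z ->
     (forall M, models T M -> forall x, Z M x -> X M x) ->
     estrong T Z Y F.
Proof.
move=> ss ts X Z Y F [HXs [[HXd [HYd [Hm _]]] H3]] HZ HZX.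
apply: mk_estrong => //.
  by move=> M HM x Hx; apply: Hm => //; apply: HZX.
move=> us psi Ep Fp.
have E1 := H3 us psi Ep Fp.
have E2 := ES_mono (@varset_catl ss us 0) (ES_of_esimple_set HZ).
apply: (ES_ext (ES_and (@varset_lt (ss ++ us) 0) E2 E1)) => M HM rho; split; first by case=> ? [].
by case=> ? ?; split=> //; split=> //; apply: HZX.
Qed.

Lemma part2 (S : sig) (T : formula S -> Prop) :
  forall (ss ts us : seq Lsort) (X : dset S ss) (Y : dset S ts) (Z : dset S us)
          (F : dfunc S ss ts) (G : dfunc S ts us),
     estrong T X Y F -> estrong T Y Z G ->
     estrong T X Z (fun M x => G M (F M x)).
Proof.
move=> ss ts us X Y Z F G [HXs [[HXd [HYd [HmF _]]] HF3]] [HYs [[_ [HZd [HmG _]]] HG3]].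
apply: mk_estrong => //.
  by move=> M HM x Hx; apply: HmG => //; apply: HmF.
move=> vs psi Ep Fp.
have [chiG [EG [FG SG]]] := HG3 vs psi Ep Fp.
apply: (ES_ext (HF3 vs chiG EG FG)) => M HM rho; split.
- move=> [HX [r [E1 [E2 /(SG _ HM) [HY [r' [E3 [E4 H]]]]]]]]; split=> //.
  exists r'; split; first by rewrite E3 E1.
  by split=> //; rewrite E4 E2.
- move=> [HX [r' [E3 [E4 H]]]]; split=> //.
  exists (tput (tput rho ts 0 (F M (tget rho ss 0))) vs (size ts) (tget rho vs (size ss))).
  rewrite tget_tput_other; last by left.
  rewrite !tput_get; split=> //; split=> //; apply/(SG _ HM).
  rewrite tget_tput_other ?tput_get; last by left.
  split; first exact: HmF.
  exists r'; split=> //; by rewrite E4.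
Qed.

Definition ren (S : sig) (g : nat -> nat) : forall u : var, term S u.1 :=
  fun u => tvar S u.1 (g u.2).

Lemma tget_ren (S : sig) (M : Lstruct S) (rho : asg M) g ss o o' :
  (forall k, o <= k < o + size ss -> g k = k - o + o') ->
  tget (fun u => teval rho (ren S g u)) ss o = tget rho ss o'.
Proof.
move=> H; apply/tget_eq_iff => -[s k] Hw /=; rewrite /ren /= H //.
exact: (varset_bound Hw).
Qed.

Lemma varset_shift ss o o' s k : varset ss o (s, k) -> varset ss o' (s, k - o + o').
Proof.
rewrite /varset /= => -[H1 H2]; split; first lia.
by have -> : k - o + o' - o' = k - o by lia.
Qed.

Lemma varset_shift' ss o o' s k k' : varset ss o (s, k) -> k' = k - o + o' -> varset ss o' (s, k').
Proof. by move=> H ->; apply: varset_shift. Qed.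

Definition sigc (S : sig) (c : term S VFs) (sh : nat) (s : Lsort) (k : nat) : term S s :=
  match k with
  | 0 => match s return term S s with VFs => c | RVs n => tvar S (RVs n) 0 end
  | k'.+1 => tvar S s (k' + sh)
  end.

Lemma ES_of_formula (S : sig) (T : formula S -> Prop) P psi :
  esimple psi -> ffv P psi -> ES T P (fun M rho => holds rho psi).
Proof. by move=> E F; exists psi. Qed.

Lemma tget_sigc (S : sig) (M : Lstruct S) (rho : asg M) c sh us :
  tget (fun u => teval rho (sigc c sh u.1 u.2)) us 1 = tget rho us sh.
Proof.
apply/tget_eq_iff => -[s k] Hw /=; move: (varset_bound Hw) => /= /andP [H1 _].
case: k H1 Hw => // k _ _ /=; congr (rho (_, _)); lia.
Qed.

Lemma strong_const (S : sig) (T : formula S -> Prop) ss (X : dset S ss) (c : term S VFs)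
  (cv : forall M : Lstruct S, LK M) :
  esimple_set T X -> tfv (fun _ => False) c -> (forall M (r : asg M), teval r c = cv M) ->
  strong3 T X (fun M _ => vf_tup (cv M)).
Proof.
move=> HX Hc Hcv us psi Ep Fp.
have E0 := ES_of_formula T Ep Fp.
have Hs : forall u, varset (VFs :: us) 0 u -> tfv (varset (ss ++ us) 0) (sigc c (size ss) u.1 u.2).
  move=> [s k] /varset_inv [[-> ->]|Hu] /=; first by apply: tfv_mono Hc.
  move: (varset_bound Hu) => /= /andP [Hk _]; case: k Hk Hu => // k _ Hu /=.
  apply: varset_catr; apply: (varset_shift' Hu) => /=; lia.
have B0 : forall w, varset (VFs :: us) 0 w -> w.2 < size ss + size us + 1.
  by move=> w /varset_lt /=; lia.
have B1 : forall w, varset (ss ++ us) 0 w -> w.2 < size ss + size us + 1.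
  by move=> w /varset_lt; rewrite size_cat /=; lia.
have E1 := ES_sub B0 B1 Hs E0.
have E2 := ES_mono (@varset_catl ss us 0) (ES_of_esimple_set HX).
apply: (ES_ext (ES_and (@varset_lt (ss ++ us) 0) E2 E1)).
move=> M HM rho; split; case=> HXx H; split=> //.
  + exists (fun u => teval rho (sigc c (size ss) u.1 u.2)); split; first by rewrite /= Hcv.
    by split=> //; rewrite tget_sigc.
  + case: H => r [E3 [E4 H]]; apply/(holds_tget Fp)/H => /=.
    case: E3 => ->; rewrite tget_sigc -E4 Hcv; by [].
Qed.

Lemma strong_binop (S : sig) (T : formula S -> Prop) ss (X : dset S ss)
  (F G : dfunc S ss [:: VFs]) (e : term S VFs) (op : forall M : Lstruct S, LK M -> LK M -> LK M) :
  strong3 T X F -> strong3 T X G ->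
  tfv (fun w => w = (VFs, 0) \/ w = (VFs, 1)) e ->
  (forall M (r : asg M), teval r e = op M (r (VFs, 0)) (r (VFs, 1))) ->
  strong3 T X (fun M x => vf_tup (op M (vf_val (F M x)) (vf_val (G M x)))).
Proof.
move=> HF HG He Hop us psi Ep Fp.
have B0 : forall w, varset (VFs :: us) 0 w -> w.2 < size us + 2 by move=> w /varset_lt /=; lia.
have B0' : forall w, varset (VFs :: VFs :: us) 0 w -> w.2 < size us + 2 by move=> w /varset_lt /=; lia.
have Hs1 : forall u, varset (VFs :: us) 0 u ->
    tfv (varset (VFs :: VFs :: us) 0) (sigc e 2 u.1 u.2).
  move=> [s k] /varset_inv [[-> ->]|Hu] /=.
    apply: tfv_mono He => w [->|->]; [exact: varset_hd | exact: varset_tl (varset_hd _ _ _)].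
  move: (varset_bound Hu) => /= /andP [Hk _]; case: k Hk Hu => // k _ Hu /=.
  apply: varset_tl; apply: varset_tl; apply: (varset_shift' Hu); lia.
have [psi1 [Ep1 [Fp1 Sp1]]] := ES_sub B0 B0' Hs1 (ES_of_formula T Ep Fp).
pose g2 := fun k => if k < size ss then k.+1 else if k == size ss then 0 else k.
have B2 : forall w, varset (ss ++ VFs :: us) 0 w -> w.2 < size ss + size us + 1.
  by move=> w /varset_lt; rewrite size_cat /=; lia.
have B2' : forall w, varset (VFs :: ss ++ us) 0 w -> w.2 < size ss + size us + 1.
  by move=> w /varset_lt; rewrite /= size_cat /=; lia.
have Hs2 : forall u, varset (ss ++ VFs :: us) 0 u -> tfv (varset (VFs :: ss ++ us) 0) (ren S g2 u).
  move=> [s k] /varset_cat_inv [Hu|Hu]; rewrite /ren /= /g2.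
  - have Hk := varset_lt Hu; rewrite ifT //.
    apply: varset_tl; apply: varset_catl; apply: (varset_shift' Hu); lia.
  - case/varset_inv: Hu => [[-> ->]|Hu]; first by rewrite ltnn eqxx; apply: varset_hd.
    move: (varset_bound Hu) => /= /andP [Hk _].
    have -> : k < size ss = false by lia.
    have -> : k == size ss = false by apply/negbTE; rewrite neq_ltn; apply/orP; right; lia.
    by apply: varset_tl; apply: (varset_catr (o := 1)).
have [psi2 [Ep2 [Fp2 Sp2]]] := ES_sub B2 B2' Hs2 (HF (VFs :: us) psi1 Ep1 Fp1).
have E4 := HG (ss ++ us) psi2 Ep2 Fp2.
pose g3 := fun k => if k < size ss then k else k - size ss.
have B5 : forall w, varset (ss ++ (ss ++ us)) 0 w -> w.2 < size ss + size ss + size us.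
  by move=> w /varset_lt; rewrite !size_cat /=; lia.
have B5' : forall w, varset (ss ++ us) 0 w -> w.2 < size ss + size ss + size us.
  by move=> w /varset_lt; rewrite !size_cat /=; lia.
have Hs3 : forall u, varset (ss ++ (ss ++ us)) 0 u -> tfv (varset (ss ++ us) 0) (ren S g3 u).
  move=> [s k] /varset_cat_inv [Hu|Hu]; rewrite /ren /= /g3.
  - have Hk := varset_lt Hu; rewrite ifT //; exact: varset_catl.
  - move: (varset_bound Hu) => /= /andP [Hk _].
    have -> : k < size ss = false by lia.
    apply: (varset_shift' Hu); lia.
apply: (ES_ext (ES_sub B5 B5' Hs3 E4)) => M HM rho.
have T3a : tget (fun u => teval rho (ren S g3 u)) ss 0 = tget rho ss 0.
  apply: tget_ren => k /= Hk; rewrite /g3 ifT; lia.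
have T3b : tget (fun u => teval rho (ren S g3 u)) (ss ++ us) (size ss) = tget rho (ss ++ us) 0.
  apply: tget_ren => k /= Hk; rewrite /g3 ifF; lia.
have T2a : forall r : asg M, tget (fun u => teval r (ren S g2 u)) ss 0 = tget r ss 1.
  move=> r; apply: tget_ren => k /= Hk; rewrite /g2 ifT; lia.
have T2b : forall r : asg M, tget (fun u => teval r (ren S g2 u)) (VFs :: us) (size ss) =
    (r (VFs, 0), tget r us (size ss).+1).
  move=> r /=; congr (_, _); first by rewrite /ren /= /g2 ltnn eqxx.
  apply: tget_ren => k /= Hk; rewrite /g2.
  have -> : k < size ss = false by lia.
  have -> : k == size ss = false by apply/negbTE; rewrite neq_ltn; apply/orP; right; lia.
  lia.
have T1 : forall r : asg M, tget (fun u => teval r (sigc e 2 u.1 u.2)) (VFs :: us) 0 =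
    (op M (r (VFs, 0)) (r (VFs, 1)), tget r us 2).
  by move=> r /=; rewrite Hop tget_sigc.
rewrite T3a T3b; split.
- move=> [HXx [r2 [EG [Ecat H2]]]].
  move/(Sp2 _ HM): H2; rewrite T2a T2b => -[_ [r1 [EF [E1 H1]]]].
  move/tget_cat_eq: Ecat => [Ess Eus]; rewrite Ess in EF.
  move/(Sp1 _ HM): H1 => H1.
  split=> //; exists (fun u => teval r1 (sigc e 2 u.1 u.2)); split.
    rewrite /= Hop -EF -EG /=; by case: E1 => ->.
  split=> //; rewrite tget_sigc; case: E1 => _ ->; by rewrite -add1n Eus.
- move=> [HXx [rs [Es [Eus H]]]]; split=> //.
  pose r2 := tput rho (VFs :: ss ++ us) 0 ((G M (tget rho ss 0)).1, tget rho (ss ++ us) 0).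
  have R2 := @tput_get _ _ rho (VFs :: ss ++ us) 0 ((G M (tget rho ss 0)).1, tget rho (ss ++ us) 0).
  have [R2a R2b] : r2 (VFs, 0) = (G M (tget rho ss 0)).1 /\ tget r2 (ss ++ us) 1 = tget rho (ss ++ us) 0.
    split; [exact: (f_equal fst R2) | exact: (f_equal snd R2)].
  have [Exs Eus2] := (iffLR (tget_cat_eq _ _ _ _ _ _)) R2b.
  exists r2; split.
    by rewrite /= R2a; case: (G M (tget rho ss 0)) => ? [].
  split=> //; apply/(Sp2 _ HM); rewrite T2a T2b Exs; split=> //.
  pose r1 := tput rho (VFs :: VFs :: us) 0
    ((F M (tget rho ss 0)).1, ((G M (tget rho ss 0)).1, tget rs us 1)).
  have R1 := @tput_get _ _ rho (VFs :: VFs :: us) 0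
    ((F M (tget rho ss 0)).1, ((G M (tget rho ss 0)).1, tget rs us 1)).
  have [R1a [R1b R1c]] : r1 (VFs, 0) = (F M (tget rho ss 0)).1 /\ r1 (VFs, 1) = (G M (tget rho ss 0)).1
      /\ tget r1 us 2 = tget rs us 1.
    split; [exact: (f_equal fst R1) | split; [exact: (f_equal (fun p => p.2.1) R1) | exact: (f_equal (fun p => p.2.2) R1)]].
  exists r1; split.
    by rewrite /= R1a; case: (F M (tget rho ss 0)) => ? [].
  split.
    rewrite /= R1b R1c R2a Eus; congr (_, _); move: Eus2; by rewrite add1n.
  apply/(Sp1 _ HM); apply/(holds_tget Fp)/H.
  rewrite T1 R1a R1b R1c /=; case: Es => ->; by [].
Qed.

Lemma bvars_RV ns : forall o b, List.In b (bvars (map RVs ns) o) -> isRV b.1.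
Proof. elim: ns => [|n ns IH] o b //= [<-|/IH] //. Qed.

Lemma definable_full (S : sig) (T : formula S -> Prop) ts : definable T (@fullset S ts).
Proof. by exists (ftrue S). Qed.

Lemma part4 (S : sig) (T : formula S -> Prop) :
  forall (ss : seq Lsort) (ns : seq nat) (X : dset S ss) (F : dfunc S ss (map RVs ns)),
     esimple_set T X ->
     definable_fun T X (@fullset S (map RVs ns)) F ->
     (exists phi, esimple phi /\ defines_graph T X F phi) ->
     estrong T X (@fullset S (map RVs ns)) F.
Proof.
move=> ss ns X F HX _ [phi [Ephi [Fphi Sphi]]].
apply: mk_estrong => //; first exact: definable_full.
set ts := map RVs ns.
move=> us psi Ep Fp.
pose N := size ss + size us.
pose K := N + size ts.
have BP : forall w, varset (ss ++ us ++ ts) 0 w -> w.2 < K.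
  by move=> w /varset_lt; rewrite !size_cat /K /N /=; lia.
pose g1 := fun k => if k < size ss then k else k - size ss + N.
have B1 : forall w, varset (ss ++ ts) 0 w -> w.2 < K.
  by move=> w /varset_lt; rewrite !size_cat /K /N /=; lia.
have Hs1 : forall u, varset (ss ++ ts) 0 u -> tfv (varset (ss ++ us ++ ts) 0) (ren S g1 u).
  move=> [s k] /varset_cat_inv [Hu|Hu]; rewrite /ren /= /g1.
  - have Hk := varset_lt Hu; rewrite ifT //; exact: varset_catl.
  - move: (varset_bound Hu) => /= /andP [Hk _].
    have -> : k < size ss = false by lia.
    apply: (varset_catr (o := 0)); apply: (varset_catr (o := 0 + size ss)).
    apply: (varset_shift' Hu); rewrite /N; lia.
have E1 := ES_sub B1 BP Hs1 (ex_intro _ phi (conj Ephi (conj Fphi Sphi)) :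
  ES T (varset (ss ++ ts) 0) (fun M rho => X M (tget rho ss 0) /\
     tget rho ts (size ss) = F M (tget rho ss 0))).
pose g2 := fun k => if k < size ts then k + N else k - size ts + size ss.
have B2 : forall w, varset (ts ++ us) 0 w -> w.2 < K.
  by move=> w /varset_lt; rewrite !size_cat /K /N /=; lia.
have Hs2 : forall u, varset (ts ++ us) 0 u -> tfv (varset (ss ++ us ++ ts) 0) (ren S g2 u).
  move=> [s k] /varset_cat_inv [Hu|Hu]; rewrite /ren /= /g2.
  - have Hk := varset_lt Hu; rewrite ifT //.
    apply: (varset_catr (o := 0)); apply: (varset_catr (o := 0 + size ss)).
    apply: (varset_shift' Hu); rewrite /N; lia.
  - move: (varset_bound Hu) => /= /andP [Hk _].
    have -> : k < size ts = false by lia.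
    apply: (varset_catr (o := 0)); apply: varset_catl.
    apply: (varset_shift' Hu); lia.
have E2 := ES_sub B2 BP Hs2 (ES_of_formula T Ep Fp).
have E12 := ES_and BP E1 E2.
have HPm : forall w, varset (ss ++ us ++ ts) 0 w ->
    List.In w (bvars ts N) \/ varset (ss ++ us) 0 w.
  move=> w /varset_cat_inv [Hw|]; first by right; exact: varset_catl.
  move/varset_cat_inv => [Hw|Hw]; first by right; exact: varset_catr.
  by left; apply/bvars_varset.
have E4 := ES_exblock (@bvars_RV ns N) (ES_mono HPm E12).
apply: (ES_ext E4) => M HM rho /=.
  have Nbs : forall w, w.2 < N -> ~ List.In w (bvars ts N).
    by move=> w Hw /bvars_varset /varset_bound /andP [? _]; lia.
  have T1a : forall r : asg M, tget (fun u => teval r (ren S g1 u)) ss 0 = tget r ss 0.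
    move=> r; apply: tget_ren => k /= Hk; rewrite /g1 ifT; lia.
  have T1b : forall r : asg M, tget (fun u => teval r (ren S g1 u)) ts (size ss) = tget r ts N.
    move=> r; apply: tget_ren => k /= Hk; rewrite /g1 ifF; lia.
  have T2a : forall r : asg M, tget (fun u => teval r (ren S g2 u)) ts 0 = tget r ts N.
    move=> r; apply: tget_ren => k /= Hk; rewrite /g2 ifT; lia.
  have T2b : forall r : asg M, tget (fun u => teval r (ren S g2 u)) us (size ts) = tget r us (size ss).
    move=> r; apply: tget_ren => k /= Hk; rewrite /g2 ifF; lia.
  have Ag : forall r : asg M, agree (bvars ts N) rho r ->
      tget r ss 0 = tget rho ss 0 /\ tget r us (size ss) = tget rho us (size ss).
    move=> r Ha; split; apply: tget_ext => w Hw; symmetry; apply: Ha; apply: Nbs;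
      move: (varset_lt Hw); rewrite /N; lia.
  split.
  + move=> [r [Ha [[HXx EF] H]]]; have [A1 A2] := Ag r Ha.
    rewrite T1a T1b A1 in HXx EF; split=> //.
    exists (fun u => teval r (ren S g2 u)); rewrite T2a T2b A2; split=> //.
  + move=> [HXx [r2 [Ets [Eus H]]]].
    exists (tput rho ts N (F M (tget rho ss 0))); split.
      move=> w Hw; symmetry; apply: tput_out => /bvars_varset; exact: Hw.
    rewrite T1a T1b tget_tput_other ?tput_get; last by left; rewrite /N; lia.
    split=> //; apply/(holds_tget Fp)/H; apply/tget_cat_eq; rewrite /= T2a T2b tput_get.
    rewrite tget_tput_other; last by left; rewrite /N; lia.
    by split.
Qed.

Theorem lemma4p8 (S : sig) (T : formula S -> Prop) (HT : theory T) :
  (* (1) restriction to an exists-simple subset *)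
  (forall (ss ts : seq Lsort) (X Z : dset S ss) (Y : dset S ts) (F : dfunc S ss ts),
     estrong T X Y F -> esimple_set T Z ->
     (forall M, models T M -> forall x, Z M x -> X M x) ->
     estrong T Z Y F) /\
  (* (2) composition *)
  (forall (ss ts us : seq Lsort) (X : dset S ss) (Y : dset S ts) (Z : dset S us)
          (F : dfunc S ss ts) (G : dfunc S ts us),
     estrong T X Y F -> estrong T Y Z G ->
     estrong T X Z (fun M x => G M (F M x))) /\
  (* (3) the exists-strongly definable functions X -> VF form a ring *)
  (forall (ss : seq Lsort) (X : dset S ss),
     esimple_set T X ->
     estrong T X (@fullset S [:: VFs]) (@fzero S ss) /\
     estrong T X (@fullset S [:: VFs]) (@fone S ss) /\
     (forall F G : dfunc S ss [:: VFs],
        estrong T X (@fullset S [:: VFs]) F -> estrong T X (@fullset S [:: VFs]) G ->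
        estrong T X (@fullset S [:: VFs]) (fadd F G) /\
        estrong T X (@fullset S [:: VFs]) (fmul F G) /\
        estrong T X (@fullset S [:: VFs]) (fopp F))) /\
  (* (4) definable functions into RV_{n1} x ... x RV_{nr} with exists-simple graph *)
  (forall (ss : seq Lsort) (ns : seq nat) (X : dset S ss) (F : dfunc S ss (map RVs ns)),
     esimple_set T X ->
     definable_fun T X (@fullset S (map RVs ns)) F ->
     (exists phi, esimple phi /\ defines_graph T X F phi) ->
     estrong T X (@fullset S (map RVs ns)) F).
Proof.
split; first exact: part1.
split; first exact: part2.
split; last exact: part4.
move=> ss X HX; split; [|split].
- apply: mk_estrong => //; first exact: definable_full.
  exact: (@strong_const S T ss X (t0 S) (fun M => (0 : LK M)%R)).
- apply: mk_estrong => //; first exact: definable_full.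
  exact: (@strong_const S T ss X (t1 S) (fun M => (1 : LK M)%R)).
- move=> F G [_ [_ HF]] [_ [_ HG]]; split; [|split].
  + apply: mk_estrong => //; first exact: definable_full.
    apply: (@strong_binop S T ss X F G (tadd (tvar S VFs 0) (tvar S VFs 1)) (fun M a b => (a + b)%R)) => //.
    by split; [left|right].
  + apply: mk_estrong => //; first exact: definable_full.
    apply: (@strong_binop S T ss X F G (tmul (tvar S VFs 0) (tvar S VFs 1)) (fun M a b => (a * b)%R)) => //.
    by split; [left|right].
  + apply: mk_estrong => //; first exact: definable_full.
    apply: (@strong_binop S T ss X F F (topp (tvar S VFs 0)) (fun M a b => (- a)%R)) => //.
    by left.
Qed.
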